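(* Suppose a set $S\subseteq\mathbb{N}^{\mathbb{N}}$ is defined by some sentence $\forall x\,\exists y\,\phi$ of $\mathscr{L}_{\max}$ and also by some sentence $\exists x\,\forall y\,\psi$ of $\mathscr{L}_{\max}$, where $\phi$ and $\psi$ are quantifier-free. Then $S$ is guessable.
   Context: A function $G:\mathbb{N}^{<\mathbb{N}}\to\{0,1\}$ ($\mathbb{N}^{<\mathbb{N}}$ = finite sequences of naturals) is a guesser for $S\subseteq\mathbb{N}^{\mathbb{N}}$ if for every $f:\mathbb{N}\to\mathbb{N}$ there is $m>0$ such that for all $n>m$, $G(f(0),\ldots,f(n))$ equals $1$ if $f\in S$ and $0$ if $f\notin S$; $S$ is guessable if it has a guesser. The language $\mathscr{L}_{\max}$ is a first-order language extended with ellipses: constant symbols $\mathbf{n}$ (also $\bar n$) for each $n\in\mathbb{N}$; an $n$-ary function symbol $\tilde w$ for each $w:\mathbb{N}^n\to\mathbb{N}$ ($n>0$); an $n$-ary predicate symbol $\tilde p$ for each $p\subseteq\mathbb{N}^n$ ($n>0$); an $\mathbb{N}^{<\mathbb{N}}$-ary function symbol $\tilde G$ for each $G:\mathbb{N}^{<\mathbb{N}}\to\mathbb{N}$ (applicable to any finite number of arguments); a unary function symbol $\mathbf{f}$; and a symbol $\cdots_x$ for each variable $x$. Besides the usual terms, for $\mathbb{N}^{<\mathbb{N}}$-ary $G$, terms $u,v$ and variable $x$, $G(u(\mathbf{0}),\cdots_x,u(v))$ is a term with free variables $(FV(u)\setminus\{x\})\cup FV(v)$. Formulas are built as usual. For $f:\mathbb{N}\to\mathbb{N}$,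 $\mathscr{M}_f$ is the structure on $\mathbb{N}$ interpreting every symbol as the object it names and $\mathbf{f}$ as $f$; terms are evaluated as usual, plus $G(u(\mathbf{0}),\cdots_x,u(v))^{s}=G\big(u(x|\mathbf{0})^{s},\ldots,u(x|\overline{v^{s}})^{s}\big)$ under an assignment $s$, where $u(x|c)$ is substitution of the constant $c$ for $x$ in $u$. A sentence $\phi$ defines $S\subseteq\mathbb{N}^{\mathbb{N}}$ if for every $f:\mathbb{N}\to\mathbb{N}$, $\mathscr{M}_f\models\phi$ iff $f\in S$. *)

(* Defs.v *)
From Stdlib Require Import List Arith Fin.
Import ListNotations.

Definition var := nat.

Inductive term : Type :=
| tvar   : var -> term
| tconst : nat -> term
| tfun   : forall n : nat,
    ((Fin.t (S n) -> nat) -> nat) -> (Fin.t (S n) -> term) -> term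
| tG     : (list nat -> nat) -> list term -> term
| tf     : term -> term
| tell   : (list nat -> nat) -> term -> var -> term -> term.
                                                         (* tell G u x v  =  G(u(0), ..._x, u(v)) *)

Inductive formula : Type :=
| fpred : forall n : nat,
    ((Fin.t (S n) -> nat) -> Prop) -> (Fin.t (S n) -> term) -> formula
| feq   : term -> term -> formula
| fnot  : formula -> formula
| fand  : formula -> formula -> formula
| for_  : formula -> formula -> formula
| fimp  : formula -> formula -> formula
| fall  : var -> formula -> formula
| fex   : var -> formula -> formula.

(* Free variables.  In  G(u(0), ..._x, u(v))  the variable x is bound in u
   (but not in v). *)
Fixpoint free_t (x : var) (t : term) : Prop :=
  match t with
  | tvar y => x = y
  | tconst _ => False
  | tfun n w args => exists i : Fin.t (S n), free_t x (args i)
  | tG G args =>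
      (fix go (l : list term) : Prop :=
         match l with
         | [] => False
         | t :: l' => free_t x t \/ go l'
         end) args
  | tf u => free_t x u
  | tell G u y v => (x <> y /\ free_t x u) \/ free_t x v
  end.

Fixpoint free_f (x : var) (phi : formula) : Prop :=
  match phi with
  | fpred n p args => exists i : Fin.t (S n), free_t x (args i)
  | feq t1 t2 => free_t x t1 \/ free_t x t2
  | fnot a => free_f x a
  | fand a b | for_ a b | fimp a b => free_f x a \/ free_f x b
  | fall y a | fex y a => x <> y /\ free_f x a
  end.

Definition sentence (phi : formula) : Prop := forall x, ~ free_f x phi.

Fixpoint qfree (phi : formula) : Prop :=
  match phi with
  | fpred _ _ _ | feq _ _ => True
  | fnot a => qfree a
  | fand a b | for_ a b | fimp a b => qfree a /\ qfree b
  | fall _ _ | fex _ _ => False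
  end.

Definition assignment := var -> nat.
Definition upd (s : assignment) (x : var) (c : nat) : assignment :=
  fun y => if Nat.eqb y x then c else s y.

(* The ellipsis term is evaluated as
   G(u^{s[x:=0]}, ..., u^{s[x:=v^s]}), which is the value of
   G(u(x|0)^s, ..., u(x|\bar{v^s})^s) (substituting a closed constant for x). *)
Fixpoint eval (f : nat -> nat) (s : assignment) (t : term) : nat :=
  match t with
  | tvar y => s y
  | tconst n => n
  | tfun n w args => w (fun i => eval f s (args i))
  | tG G args => G (map (eval f s) args)
  | tf u => f (eval f s u)
  | tell G u x v =>
      G (map (fun i => eval f (upd s x i) u) (seq 0 (S (eval f s v))))
  end.

Fixpoint sat (f : nat -> nat) (s : assignment) (phi : formula) : Prop :=
  match phi with
  | fpred n p args => p (fun i => eval f s (args i))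
  | feq t1 t2 => eval f s t1 = eval f s t2
  | fnot a => ~ sat f s a
  | fand a b => sat f s a /\ sat f s b
  | for_ a b => sat f s a \/ sat f s b
  | fimp a b => sat f s a -> sat f s b
  | fall x a => forall c : nat, sat f (upd s x c) a
  | fex x a => exists c : nat, sat f (upd s x c) a
  end.

(* M_f |= phi for a sentence (assignment irrelevant; we use the zero one). *)
Definition models (f : nat -> nat) (phi : formula) : Prop :=
  sat f (fun _ => 0) phi.

Definition defines (phi : formula) (S : (nat -> nat) -> Prop) : Prop :=
  sentence phi /\ forall f : nat -> nat, models f phi <-> S f.

Definition prefix (f : nat -> nat) (n : nat) : list nat := map f (seq 0 (S n)).

(* Guessers: G : N^{<N} -> {0,1}, with 1 encoded as true and 0 as false. *)
Definition guesser (G : list nat -> bool) (S : (nat -> nat) -> Prop) : Prop :=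
  forall f : nat -> nat, exists m : nat, 0 < m /\
    forall n : nat, m < n -> (G (prefix f n) = true <-> S f).

Definition guessable (S : (nat -> nat) -> Prop) : Prop :=
  exists G : list nat -> bool, guesser G S.

(* Main.v *)
Require Import Defs.
From Stdlib Require Import List Arith Lia Fin Classical ClassicalDescription FunctionalExtensionality.
Import ListNotations.

Definition agreeN (N : nat) (g f : nat -> nat) := forall i, i < N -> g i = f i.

Lemma agreeN_mono N M g f : N <= M -> agreeN M g f -> agreeN N g f.
Proof. intros H A i Hi. apply A. lia. Qed.

Section TermInd.
Variable P : term -> Prop.
Hypothesis Hvar : forall v, P (tvar v).
Hypothesis Hconst : forall n, P (tconst n).
Hypothesis Hfun : forall n w args, (forall i, P (args i)) -> P (tfun n w args).
Hypothesis HG : forall G args, Forall P args -> P (tG G args).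
Hypothesis Hf : forall u, P u -> P (tf u).
Hypothesis Hell : forall G u x v, P u -> P v -> P (tell G u x v).

Fixpoint term_ind' (t : term) : P t :=
  match t with
  | tvar v => Hvar v
  | tconst n => Hconst n
  | tfun n w args => Hfun n w args (fun i => term_ind' (args i))
  | tG G args => HG G args
      ((fix go (l : list term) : Forall P l :=
          match l with
          | [] => Forall_nil _
          | t :: l' => Forall_cons t (term_ind' t) (go l')
          end) args)
  | tf u => Hf u (term_ind' u)
  | tell G u x v => Hell G u x v (term_ind' u) (term_ind' v)
  end.
End TermInd.

Lemma fin_bound : forall k (Q : Fin.t k -> nat -> Prop),
  (forall i N M, N <= M -> Q i N -> Q i M) ->
  (forall i, exists N, Q i N) -> exists N, forall i, Q i N.
Proof.
  induction k; intros Q Hm H.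
  - exists 0. intro i. inversion i.
  - destruct (IHk (fun i => Q (Fin.FS i))) as [N1 H1].
    + intros; eapply Hm; eauto.
    + intros; apply H.
    + destruct (H Fin.F1) as [N2 H2].
      exists (max N1 N2). intro i.
      apply (Fin.caseS' i (fun i => Q i (max N1 N2))).
      * eapply Hm; [|exact H2]; lia.
      * intro p. eapply Hm; [|apply H1]; lia.
Qed.

Lemma nat_bound : forall V (Q : nat -> nat -> Prop),
  (forall i N M, N <= M -> Q i N -> Q i M) ->
  (forall i, i < V -> exists N, Q i N) -> exists N, forall i, i < V -> Q i N.
Proof.
  induction V; intros Q Hm H.
  - exists 0. intros; lia.
  - destruct (IHV Q Hm) as [N1 H1]. { intros; apply H; lia. }
    destruct (H V) as [N2 H2]. lia.
    exists (max N1 N2). intros i Hi.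
    destruct (Nat.eq_dec i V).
    + subst. eapply Hm; [|exact H2]; lia.
    + eapply Hm; [|apply H1]; lia.
Qed.

Lemma list_bound : forall (l : list term) (Q : term -> nat -> Prop),
  (forall t N M, N <= M -> Q t N -> Q t M) ->
  Forall (fun t => exists N, Q t N) l -> exists N, Forall (fun t => Q t N) l.
Proof.
  induction l; intros Q Hm H.
  - exists 0. constructor.
  - inversion H; subst. destruct H2 as [N1 H1].
    destruct (IHl Q Hm H3) as [N2 H2].
    exists (max N1 N2). constructor.
    + eapply Hm; [|exact H1]; lia.
    + eapply Forall_impl; [|exact H2]. intros t Ht. apply (Hm t N2); [lia|exact Ht].
Qed.

Lemma eval_cont : forall t f s, exists N, forall g, agreeN N g f -> eval g s t = eval f s t.
Proof.
  induction t using term_ind'; intros f s.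
  - exists 0; reflexivity.
  - exists 0; reflexivity.
  - destruct (fin_bound (S n) (fun i N => forall g, agreeN N g f -> eval g s (args i) = eval f s (args i)))
      as [N HN].
    + intros i N M Hle HQ g A. apply HQ. eapply agreeN_mono; eauto.
    + intro i. apply H.
    + exists N. intros g A. simpl. f_equal. apply functional_extensionality. intro i. apply HN; auto.
  - destruct (list_bound args (fun t N => forall g, agreeN N g f -> eval g s t = eval f s t)) as [N HN].
    + intros t N M Hle HQ g A. apply HQ. eapply agreeN_mono; eauto.
    + eapply Forall_impl; [|exact H]. intros a Ha. apply Ha.
    + exists N. intros g A. simpl. f_equal.
      clear H. induction args; simpl; auto.
      inversion HN; subst. f_equal; auto.
  - destruct (IHt f s) as [N1 H1].
    exists (max N1 (S (eval f s t))). intros g A. simpl.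
    rewrite H1 by (eapply agreeN_mono; [|exact A]; lia).
    apply A. lia.
  - destruct (IHt2 f s) as [Nv Hv].
    destruct (nat_bound (S (eval f s t2)) (fun i N => forall g, agreeN N g f -> eval g (upd s x i) t1 = eval f (upd s x i) t1)) as [Nu Hu].
    + intros i N M Hle HQ g A. apply HQ. eapply agreeN_mono; eauto.
    + intros i _. apply IHt1.
    + exists (max Nv Nu). intros g A. cbn [eval].
      rewrite Hv by (eapply agreeN_mono; [|exact A]; lia).
      f_equal. apply map_ext_in. intros i Hi. apply in_seq in Hi.
      apply Hu; [lia|]. eapply agreeN_mono; [|exact A]; lia.
Qed.

Lemma sat_cont : forall phi, qfree phi -> forall f s,
  exists N, forall g, agreeN N g f -> (sat g s phi <-> sat f s phi).
Proof.
  induction phi; simpl; intros Hq f s.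
  - destruct (fin_bound (S n) (fun i N => forall g, agreeN N g f -> eval g s (t i) = eval f s (t i)))
      as [N HN].
    + intros i N M Hle HQ g A. apply HQ. eapply agreeN_mono; eauto.
    + intro i. apply eval_cont.
    + exists N. intros g A.
      replace (fun i => eval g s (t i)) with (fun i => eval f s (t i)); [tauto|].
      apply functional_extensionality. intro i. symmetry. apply HN; auto.
  - destruct (eval_cont t f s) as [N1 H1]. destruct (eval_cont t0 f s) as [N2 H2].
    exists (max N1 N2). intros g A.
    rewrite H1, H2 by (eapply agreeN_mono; [|exact A]; lia). tauto.
  - destruct (IHphi Hq f s) as [N H]. exists N. intros g A. rewrite H; tauto.
  - destruct Hq as [Q1 Q2].
    destruct (IHphi1 Q1 f s) as [N1 H1]. destruct (IHphi2 Q2 f s) as [N2 H2].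
    exists (max N1 N2). intros g A.
    rewrite H1, H2 by (eapply agreeN_mono; [|exact A]; lia). tauto.
  - destruct Hq as [Q1 Q2].
    destruct (IHphi1 Q1 f s) as [N1 H1]. destruct (IHphi2 Q2 f s) as [N2 H2].
    exists (max N1 N2). intros g A.
    rewrite H1, H2 by (eapply agreeN_mono; [|exact A]; lia). tauto.
  - destruct Hq as [Q1 Q2].
    destruct (IHphi1 Q1 f s) as [N1 H1]. destruct (IHphi2 Q2 f s) as [N2 H2].
    exists (max N1 N2). intros g A.
    rewrite H1, H2 by (eapply agreeN_mono; [|exact A]; lia). tauto.
  - contradiction.
  - contradiction.
Qed.

Definition agreeL (l : list nat) (g : nat -> nat) := forall i, i < length l -> g i = nth i l 0.

Lemma prefix_len f n : length (prefix f n) = S n.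
Proof. unfold prefix. rewrite length_map, length_seq. reflexivity. Qed.

Lemma prefix_nth f n i : i < S n -> nth i (prefix f n) 0 = f i.
Proof.
  intro H. unfold prefix. rewrite (nth_indep _ 0 (f 0)) by (rewrite length_map, length_seq; lia).
  rewrite map_nth, seq_nth by lia. reflexivity.
Qed.

Lemma agreeL_prefix f n g : agreeL (prefix f n) g <-> agreeN (S n) g f.
Proof.
  unfold agreeL, agreeN. rewrite prefix_len. split; intros H i Hi.
  - rewrite H by lia. apply prefix_nth; lia.
  - rewrite H by lia. symmetry; apply prefix_nth; lia.
Qed.

Lemma least_ex (P : nat -> Prop) : (exists c, P c) -> exists c, P c /\ forall c', c' < c -> ~ P c'.
Proof.
  intros [c Hc]. revert Hc. induction c using (well_founded_induction lt_wf). intro Hc.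
  destruct (classic (exists c', c' < c /\ P c')) as [[c' [H1 H2]]|Hn].
  - eapply H; eauto.
  - exists c. split; auto. intros c' H1 H2. apply Hn; eauto.
Qed.

Section Abs.
Variable K : nat -> (nat -> nat) -> nat -> Prop.

Definition Refuted (l : list nat) (c : nat) :=
  exists b, b <= length l /\ forall g, agreeL l g -> ~ K c g b.

Definition PG (l : list nat) :=
  exists c, c <= length l /\ ~ Refuted l c /\ (forall c', c' < c -> Refuted l c') /\ Nat.even c = true.

Definition Gabs (l : list nat) : bool := if excluded_middle_informative (PG l) then true else false.

Lemma abstract_guess (Sside : (nat -> nat) -> Prop) :
  (forall c b f, exists N, forall g, agreeN N g f -> (K c g b <-> K c f b)) ->
  (forall f, exists c, forall b, K c f b) ->
  (forall f c, (forall b, K c f b) -> (Nat.even c = true <-> Sside f)) ->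
  guessable Sside.
Proof.
  intros Hc Hex Hside. exists Gabs. intro f.
  destruct (least_ex (fun c => forall b, K c f b) (Hex f)) as [cs [Hcs Hmin]].
  destruct (nat_bound cs (fun i N => forall n, N <= n -> Refuted (prefix f n) i)) as [N HN].
  { intros i N M Hle HQ n Hn. apply HQ; lia. }
  { intros i Hi. specialize (Hmin i Hi).
    apply not_all_ex_not in Hmin. destruct Hmin as [b Hb].
    destruct (Hc i b f) as [N HN].
    exists (max N b). intros n Hn. exists b. split; [rewrite prefix_len; lia|].
    intros g A. apply (proj1 (agreeL_prefix f n g)) in A. rewrite HN; auto.
    eapply agreeN_mono; [|exact A]; lia. }
  assert (NR : forall n, ~ Refuted (prefix f n) cs).
  { intros n [b [_ Hb]]. apply (Hb f); [|apply Hcs]. apply (proj2 (agreeL_prefix f n f)). intros i _; reflexivity. }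
  exists (S (max N cs)). split; [lia|]. intros n Hn.
  rewrite <- (Hside f cs Hcs). unfold Gabs.
  destruct (excluded_middle_informative (PG (prefix f n))) as [HP|HP].
  - split; intros _; auto.
    destruct HP as [c [Hle [Hsurv [Hsm Hev]]]].
    destruct (lt_eq_lt_dec c cs) as [[Hlt|Heq]|Hgt].
    + exfalso. apply Hsurv. apply HN; auto; lia.
    + subst; auto.
    + exfalso. apply (NR n). apply Hsm; auto.
  - split; intro H; [discriminate|]. exfalso. apply HP.
    exists cs. rewrite prefix_len. repeat split; auto; try lia.
    intros c' Hc'. apply HN; auto; lia.
Qed.
End Abs.

Definition cand (x y x' y' : var) (phi psi : formula) (c : nat) (g : nat -> nat) (b : nat) : Prop :=
  if Nat.even c then sat g (upd (upd (fun _ => 0) x' (Nat.div2 c)) y' b) psi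
  else ~ sat g (upd (upd (fun _ => 0) x (Nat.div2 c)) y b) phi.

Theorem mainTheorem8 (S : (nat -> nat) -> Prop)
  (x y : var) (phi : formula) (x' y' : var) (psi : formula) :
  qfree phi -> qfree psi ->
  defines (fall x (fex y phi)) S ->
  defines (fex x' (fall y' psi)) S ->
  guessable S.
Proof.
  intros Qphi Qpsi [_ D1] [_ D2].
  apply (abstract_guess (cand x y x' y' phi psi)).
  - intros c b f. unfold cand. destruct (Nat.even c).
    + apply sat_cont; auto.
    + destruct (sat_cont phi Qphi f (upd (upd (fun _ => 0) x (Nat.div2 c)) y b)) as [N HN].
      exists N. intros g A. rewrite HN; tauto.
  - intro f. destruct (classic (S f)) as [Hs|Hs].
    + apply D2 in Hs. destruct Hs as [a Ha]. exists (2 * a). intro b.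
      unfold cand. rewrite Nat.even_even, Nat.div2_double. apply Ha.
    + assert (~ models f (fall x (fex y phi))) as Hn by (rewrite D1; auto).
      unfold models in Hn. simpl in Hn. apply not_all_ex_not in Hn. destruct Hn as [a Ha].
      exists (2 * a + 1). intro b. unfold cand.
      rewrite Nat.even_odd. replace (2 * a + 1) with (Datatypes.S (2 * a)) by lia.
      rewrite Nat.div2_succ_double. intro H. apply Ha. exists b. exact H.
  - intros f c Hc. unfold cand in Hc. destruct (Nat.even c).
    + split; auto. intros _. apply D2. exists (Nat.div2 c). exact Hc.
    + split; [discriminate|]. intro Hs. apply D1 in Hs.
      destruct (Hs (Nat.div2 c)) as [b Hb]. exfalso. apply (Hc b). exact Hb.
Qed.
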